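(* Let $\xi,\eta,\zeta\colon\mathbb{R}\times(-\infty,\infty]\to\mathbb{R}$ be multiplicity functions, each with finite support avoiding the diagonal $\Delta=\{(x_1,x_2):x_1=x_2\}$. Then: (positivity) $W_1^{\pm}(\xi,\eta)\ge0$, and $W_1^{\pm}(\xi,\eta)>0$ if and only if $\xi\ne\eta$; (symmetry) $W_1^{\pm}(\xi,\eta)=W_1^{\pm}(\eta,\xi)$; (triangle inequality) $W_1^{\pm}(\xi,\eta)+W_1^{\pm}(\eta,\zeta)\ge W_1^{\pm}(\xi,\zeta)$.
   Context: The support of $f$ is the set of points where $f\ne0$. For $x=(x_1,x_2),y=(y_1,y_2)\in\mathbb{R}\times(-\infty,\infty]$ let $\|x-y\|_1=|x_1-y_1|+|x_2-y_2|$ (with $|\infty-\infty|=0$ and $|\infty-a|=\infty$ for real $a$) and $\delta(x)=|x_2-x_1|$. For non-negative $\xi,\eta$ with finite supports, the $1$-Wasserstein distance is $W_1(\xi,\eta)=\inf_{T,X,Y}\big[\sum_{x,y}T(x,y)\|x-y\|_1+\sum_xX(x)\delta(x)+\sum_yY(y)\delta(y)\big]$ over $T\colon\mathrm{supp}\,\xi\times\mathrm{supp}\,\eta\to[0,\infty)$, $X\colon\mathrm{supp}\,\xi\to[0,\infty)$, $Y\colon\mathrm{supp}\,\eta\to[0,\infty)$ with $X(x)+\sum_{y}T(x,y)=\xi(x)$ and $Y(y)+\sum_xT(x,y)=\eta(y)$ for all $x\in\mathrm{supp}\,\xi$, $y\in\mathrm{supp}\,\eta$. For arbitrary $\xi=\xi^+-\xi^-$,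 $\eta=\eta^+-\eta^-$ with $\xi^\pm,\eta^\pm$ non-negative, the alternating $1$-Wasserstein distance is $W_1^{\pm}(\xi,\eta)=W_1(\xi^++\eta^-,\xi^-+\eta^+)$ (independent of the decomposition). Values $\infty$ are allowed (extended metric). *)

(* Defs.v *)
From HB Require Import structures.
From mathcomp Require Import all_boot all_order all_algebra.
From mathcomp Require Import all_classical all_reals.
From mathcomp Require Import ereal.
Set Implicit Arguments. Unset Strict Implicit. Unset Printing Implicit Defensive.
Import Order.TTheory GRing.Theory Num.Theory.
Local Open Scope classical_set_scope.
Local Open Scope ring_scope.

(* Points of R x (-oo, +oo] are encoded as elements of R * \bar R; the value
   -oo of the second coordinate is excluded by hypothesis on the supports. *)
Definition pt (R : realType) := (R * \bar R)%type.

Definition supp (R : realType) (f : pt R -> R) : set (pt R) := [set x | f x != 0].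

Definition dist1 (R : realType) (x y : pt R) : \bar R :=
  (`|x.1 - y.1|%:E + match x.2, y.2 with
                      | +oo%E, +oo%E => 0
                      | EFin a, EFin b => `|a - b|%:E
                      | _, _ => +oo
                      end)%E.

Definition delta (R : realType) (x : pt R) : \bar R := `|(x.2 - x.1%:E)%E|%E.

Definition feasible (R : realType) (xi eta : pt R -> R)
    (T : pt R -> pt R -> R) (X Y : pt R -> R) : Prop :=
  (forall x y, x \in supp xi -> y \in supp eta -> 0 <= T x y) /\
  (forall x, x \in supp xi -> 0 <= X x) /\
  (forall y, y \in supp eta -> 0 <= Y y) /\
  (forall x, x \in supp xi -> X x + \sum_(y \in supp eta) T x y = xi x) /\
  (forall y, y \in supp eta -> Y y + \sum_(x \in supp xi) T x y = eta y).

Definition cost (R : realType) (xi eta : pt R -> R)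
    (T : pt R -> pt R -> R) (X Y : pt R -> R) : \bar R :=
  (\sum_(x \in supp xi) \sum_(y \in supp eta) ((T x y)%:E * dist1 x y)
   + \sum_(x \in supp xi) ((X x)%:E * delta x)
   + \sum_(y \in supp eta) ((Y y)%:E * delta y))%E.

Definition W1 (R : realType) (xi eta : pt R -> R) : \bar R :=
  ereal_inf [set c | exists T X Y, feasible xi eta T X Y /\ c = cost xi eta T X Y].

Definition posp (R : realType) (f : pt R -> R) : pt R -> R := fun x => Num.max (f x) 0.
Definition negp (R : realType) (f : pt R -> R) : pt R -> R := fun x => Num.max (- f x) 0.

Definition W1pm (R : realType) (xi eta : pt R -> R) : \bar R :=
  W1 (fun x => posp xi x + negp eta x) (fun x => negp xi x + posp eta x).

Definition admissible (R : realType) (f : pt R -> R) : Prop :=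
  finite_set (supp f) /\
  (forall x, f x != 0 -> x.2 != -oo%E /\ x.2 != x.1%:E).

(* Main.v *)
Require Import Defs.
From HB Require Import structures.
From mathcomp Require Import all_boot all_order all_algebra.
From mathcomp Require Import all_classical all_reals.
From mathcomp Require Import ereal.
From mathcomp Require Import finmap ring lra.
Import Order.TTheory GRing.Theory Num.Theory.
Local Open Scope ring_scope.

Lemma pfacts (R : realType) (In Out : R) : 0 <= In -> 0 <= Out ->
  let p := (Num.max In Out)^-1 in
  [/\ 0 <= p, p * In <= 1, p * Out <= 1 &
      In * (1 - p * Out) = 0 \/ Out * (1 - p * In) = 0].
Proof.
move=> hI hO p.
have [hle|hlt] := leP In Out.
- have hm : Num.max In Out = Out by apply/max_idPr.
  rewrite /p hm; have [hO0|hO0] := eqVneq Out 0.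
    rewrite hO0 in hle *; rewrite invr0 !mul0r; split => //.
    by right.
  have hOp : 0 < Out by rewrite lt_def hO0 hO.
  split; first by rewrite invr_ge0.
  + by rewrite mulrC ler_pdivrMr // mul1r.
  + by rewrite mulVf.
  + by left; rewrite mulVf // subrr mulr0.
- have hm : Num.max In Out = In by apply/max_idPl/ltW.
  have hIp : 0 < In by apply: le_lt_trans hlt.
  rewrite /p hm; split; first by rewrite invr_ge0 ltW.
  + by rewrite mulVf // gt_eqF.
  + by rewrite mulrC ler_pdivrMr // mul1r ltW.
  + by right; rewrite mulVf ?gt_eqF // subrr mulr0.
Qed.
Arguments pfacts {R In Out}.

Section Flow.
Variables (R : realType) (N : finType) (D : N) (c : N -> N -> \bar R).
Hypothesis c0 : forall u v, (0 <= c u v)%E.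
Hypothesis ctri : forall u v r, r != D -> (c u v <= c u r + c r v)%E.

Definition out (F : N -> N -> R) u := \sum_v F u v.
Definition inn (F : N -> N -> R) u := \sum_v F v u.
Definition fcost (F : N -> N -> R) : \bar R :=
  (\sum_u \sum_v ((F u v)%:E * c u v))%E.
Definition nneg (F : N -> N -> R) := forall u v, 0 <= F u v.
Definition thr F := [set u | (u != D) && (0 < out F u) && (0 < inn F u)].

Lemma sumE_distr (I : finType) (P : pred I) (f : I -> R) (k : R) (x : \bar R) :
  (forall i, P i -> 0 <= f i) -> 0 <= k ->
  (\sum_(i | P i) ((k * f i)%:E * x) = (k * \sum_(i | P i) f i)%:E * x)%E.
Proof.
move=> hf hk; rewrite -ge0_sume_distrl; last first.
  by move=> i Pi; rewrite lee_fin mulr_ge0 // hf.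
by rewrite sumEFin mulr_sumr.
Qed.

Section Step.
Variables (F : N -> N -> R) (r : N).
Hypothesis F0 : nneg F.
Let In := \sum_(u | u != r) F u r.
Let Out := \sum_(v | v != r) F r v.
Let p := (Num.max In Out)^-1.
Let G u v := if u == r then (if v == r then 0 else F r v * (1 - p * In))
  else if v == r then F u r * (1 - p * Out) else F u v + p * F u r * F r v.

Let In0 : 0 <= In. Proof. by apply: sumr_ge0 => u _; apply: F0. Qed.
Let Out0 : 0 <= Out. Proof. by apply: sumr_ge0 => u _; apply: F0. Qed.

Let G0 : nneg G.
Proof.
have [hp hpI hpO _] := pfacts In0 Out0.
move=> u v; rewrite /G; case: eqP => _; case: eqP => _ //.
- by rewrite mulr_ge0 // subr_ge0.
- by rewrite mulr_ge0 // subr_ge0.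
- by rewrite addr_ge0 // !mulr_ge0.
Qed.

Let outG u : u != r -> out G u = out F u.
Proof.
move=> hu; rewrite /out (bigD1 r) //= [in RHS](bigD1 r) //=.
rewrite /G eqxx (negbTE hu).
under eq_bigr => v hv do rewrite (negbTE hv).
rewrite big_split /= -mulr_sumr -/Out; ring.
Qed.

Let innG v : v != r -> inn G v = inn F v.
Proof.
move=> hv; rewrite /inn (bigD1 r) //= [in RHS](bigD1 r) //=.
rewrite /G eqxx (negbTE hv).
under eq_bigr => u hu do rewrite (negbTE hu).
rewrite big_split /= -mulr_suml -mulr_sumr -/In; ring.
Qed.

Let outGr : out G r = Out * (1 - p * In).
Proof.
rewrite /out (bigD1 r) //= /G eqxx add0r mulr_suml.
by apply: eq_bigr => v hv; rewrite (negbTE hv).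
Qed.

Let innGr : inn G r = In * (1 - p * Out).
Proof.
rewrite /inn (bigD1 r) //= /G eqxx add0r mulr_suml.
by apply: eq_bigr => v hv; rewrite (negbTE hv).
Qed.

Let outFr : out F r = F r r + Out.
Proof. by rewrite /out (bigD1 r). Qed.
Let innFr : inn F r = F r r + In.
Proof. by rewrite /inn (bigD1 r). Qed.

Let divG u : out G u - inn G u = out F u - inn F u.
Proof.
have [->|hu] := eqVneq u r; last by rewrite outG // innG.
by rewrite outGr innGr outFr innFr; ring.
Qed.

Let thrG : r \in thr F -> thr G \proper thr F.
Proof.
move=> hr.
have hno : ~~ ((0 < out G r) && (0 < inn G r)).
  rewrite outGr innGr.
  by have [_ _ _ [->|->]] := pfacts In0 Out0; rewrite ltxx ?andbF.
apply/properP; split.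
  apply/fintype.subsetP => u; rewrite !inE.
  have [->|hu] := eqVneq u r; last by rewrite outG // innG.
  by move=> /andP[/andP[_ h1] h2]; case/negP: hno; rewrite h1 h2.
exists r => //; rewrite inE -andbA negb_and; apply/orP; right; exact: hno.
Qed.

Let costG : r != D -> (fcost G <= fcost F)%E.
Proof.
move=> rD.
have [hp hpI hpO _] := pfacts In0 Out0.
have hpI' : 0 <= 1 - p * In by rewrite subr_ge0.
have hpO' : 0 <= 1 - p * Out by rewrite subr_ge0.
have eG : fcost G = (\sum_(v | v != r) ((F r v * (1 - p*In))%:E * c r v) +
   \sum_(u | u != r) ((F u r * (1 - p*Out))%:E * c u r +
      \sum_(v | v != r) ((F u v + p * F u r * F r v)%:E * c u v)))%E.
  rewrite /fcost (bigD1 r) //=; congr (_ + _)%E.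
    rewrite (bigD1 r) //= {1}/G eqxx mul0e add0e; apply: eq_bigr => v hv.
    by rewrite /G eqxx (negbTE hv).
  apply: eq_bigr => u hu; rewrite (bigD1 r) //= {1}/G eqxx (negbTE hu).
  congr (_ + _)%E; apply: eq_bigr => v hv; by rewrite /G (negbTE hu) (negbTE hv).
have eF : (\sum_(v | v != r) ((F r v)%:E * c r v) +
   \sum_(u | u != r) ((F u r)%:E * c u r +
      \sum_(v | v != r) ((F u v)%:E * c u v)) <= fcost F)%E.
  rewrite /fcost [X in (_ <= X)%E](bigD1 r) //=; apply: leeD.
    by rewrite [X in (_ <= X)%E](bigD1 r) //=; apply: leeDr; rewrite mule_ge0 // lee_fin F0.
  by apply: lee_sum => u hu; rewrite [X in (_ <= X)%E](bigD1 r) //=.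
have key u : u != r ->
  ((F u r * (1 - p*Out))%:E * c u r +
      \sum_(v | v != r) ((F u v + p * F u r * F r v)%:E * c u v) <=
   ((F u r)%:E * c u r + \sum_(v | v != r) ((F u v)%:E * c u v)) +
   \sum_(v | v != r) ((p * F r v * F u r)%:E * c r v))%E.
  move=> hu.
  have h1 : (\sum_(v | v != r) ((F u v + p * F u r * F r v)%:E * c u v) <=
     \sum_(v | v != r) (((F u v)%:E * c u v + (p * F u r * F r v)%:E * c u r)
        + (p * F r v * F u r)%:E * c r v))%E.
    apply: lee_sum => v hv; rewrite EFinD ge0_muleDl ?lee_fin ?F0 ?mulr_ge0 ?F0 //.
    rewrite -addeA; apply: leeD => //.
    rewrite [(p * F r v * F u r)]mulrAC [p * F u r * F r v]mulrAC.
    by rewrite -ge0_muleDr ?c0 //; apply: lee_wpmul2l; [rewrite lee_fin !mulr_ge0 ?F0|apply: ctri].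
  apply: le_trans (leeD (lexx _) h1) _.
  rewrite !big_split /= sumE_distr ?F0 ?mulr_ge0 ?F0 // -/Out.
  rewrite addeA; apply: leeD => //.
  rewrite [X in (_ + X <= _)%E]addeC addeA; apply: leeD => //.
  rewrite -ge0_muleDl; last 2 first.
  - by rewrite lee_fin mulr_ge0 ?F0.
  - by rewrite lee_fin !mulr_ge0 ?F0.
  rewrite -EFinD.
  by have -> : F u r * (1 - p * Out) + p * F u r * Out = F u r by ring.
rewrite eG; apply: le_trans eF.
have h2 := lee_sum (index_enum N) key; rewrite [X in (_ <= X)%E]big_split /= in h2.
have h3 : (\sum_(u | u != r) \sum_(v | v != r) ((p * F r v * F u r)%:E * c r v) =
   \sum_(v | v != r) ((p * F r v * In)%:E * c r v))%E.
  rewrite exchange_big; apply: eq_bigr => v hv.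
  by rewrite sumE_distr ?mulr_ge0 ?F0.
rewrite h3 in h2; apply: le_trans (leeD (lexx _) h2) _.
rewrite [X in (_ + X <= _)%E]addeC addeA; apply: leeD => //.
rewrite -big_split /=; apply: lee_sum => v hv.
rewrite -ge0_muleDl; last 2 first.
- by rewrite lee_fin mulr_ge0 ?F0.
- by rewrite lee_fin !mulr_ge0 ?F0.
rewrite -EFinD.
by have -> : F r v * (1 - p * In) + p * F r v * In = F r v by ring.
Qed.

Lemma step_ex : r \in thr F -> exists G, [/\ nneg G,
  forall u, out G u - inn G u = out F u - inn F u,
  (fcost G <= fcost F)%E & thr G \proper thr F].
Proof.
move=> hr; exists G; split; [exact: G0 | exact: divG | | exact: thrG].
by apply: costG; move: hr; rewrite inE => /andP[/andP[]].
Qed.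

End Step.

Lemma reduce0 F : nneg F -> exists G, [/\ nneg G,
  forall u, out G u - inn G u = out F u - inn F u,
  (fcost G <= fcost F)%E & forall u, u \notin thr G].
Proof.
move: {2}#|thr F| (leqnn #|thr F|) => n.
elim: n F => [|n IH] F hn F0.
  exists F; split => // u; move: hn; rewrite leqn0 cards_eq0 => /eqP ->.
  by rewrite inE.
have [e0|[r hr]] := set_0Vmem (thr F).
  by exists F; split => // u; rewrite e0 inE.
have [G [G0 dG cG pG]] := @step_ex F r F0 hr.
have hG : (#|thr G| <= n)%N.
  by have := proper_card pG => h; rewrite -ltnS; apply: leq_trans h hn.
have [H [H0 dH cH tH]] := IH G hG G0.
exists H; split => //.
  by move=> u; rewrite dH dG.
exact: le_trans cH cG.
Qed.

Lemma reduce F : nneg F -> exists G, [/\ nneg G,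
  forall u, out G u - inn G u = out F u - inn F u,
  (fcost G <= fcost F)%E & forall u, u != D -> out G u = 0 \/ inn G u = 0].
Proof.
move=> F0; have [G [G0 dG cG tG]] := @reduce0 F F0.
exists G; split => // u uD.
have o0 : 0 <= out G u by apply: sumr_ge0 => v _; apply: G0.
have i0 : 0 <= inn G u by apply: sumr_ge0 => v _; apply: G0.
move: (tG u); rewrite inE uD /= negb_and !lt_def o0 i0 !andbT !negbK.
by case/orP => /eqP ->; [left|right].
Qed.

End Flow.
Arguments out {R N} F u.
Arguments inn {R N} F u.
Arguments fcost {R N} c F.
Arguments nneg {R N} F.
Lemma big_opt (R : Type) (idx : R) (op : Monoid.com_law idx) (T : finType) (f : option T -> R) :
  \big[op/idx]_(v : option T) f v = op (f None) (\big[op/idx]_(x : T) f (Some x)).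
Proof.
rewrite (bigD1 None) //=; congr (op _ _).
rewrite (reindex_omap (@Some T) id) //=.
  by apply: eq_bigl => x; rewrite /= ?eqxx.
by case=> [x|].
Qed.

Lemma big_optR (R : realType) (T : finType) (f : option T -> R) :
  \sum_(v : option T) f v = f None + \sum_(x : T) f (Some x).
Proof. exact: big_opt. Qed.

Lemma big_optE (R : realType) (T : finType) (f : option T -> \bar R) :
  (\sum_(v : option T) f v = f None + \sum_(x : T) f (Some x))%E.
Proof. exact: big_opt. Qed.


Section Metric.
Variable R : realType.
Implicit Types x y z : pt R.

Lemma dist1_ge0 x y : (0 <= dist1 x y)%E.
Proof.
case: x => x1 [a| |]; case: y => y1 [b| |]; rewrite /dist1 /= ?leey //.
  by rewrite -EFinD lee_fin addr_ge0.
by rewrite adde0 lee_fin.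
Qed.

Lemma delta_ge0 x : (0 <= delta x)%E.
Proof. exact: abse_ge0. Qed.

Lemma dist1C x y : dist1 x y = dist1 y x.
Proof.
by case: x => x1 [a| |]; case: y => y1 [b| |]; rewrite /dist1 /= (distrC x1 y1) // (distrC a b).
Qed.

Lemma dist1_tri x y z : (dist1 x z <= dist1 x y + dist1 y z)%E.
Proof.
case: x => x1 [a| |]; case: y => y1 [b| |]; case: z => z1 [e| |];
  rewrite /dist1 /= ?leey ?addey ?addye //.
- rewrite -!EFinD lee_fin.
  have := ler_distD y1 x1 z1; have := ler_distD b a e; lra.
- by rewrite !adde0 -EFinD lee_fin ler_distD.
Qed.

Lemma delta_tri1 r y : (delta y <= delta r + dist1 r y)%E.
Proof.
case: r => r1 [a| |]; case: y => y1 [b| |]; rewrite /delta /dist1 /= ?leey ?addey ?addye //.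
rewrite -!EFinD lee_fin.
have := ler_distD a b y1; have := ler_distD r1 a y1.
rewrite (distrC b a); lra.
Qed.

Lemma delta_tri2 x r : (delta x <= dist1 x r + delta r)%E.
Proof. by rewrite addeC dist1C; apply: delta_tri1. Qed.

Lemma dist1xx x : x.2 != -oo%E -> dist1 x x = 0%E.
Proof.
by case: x => x1 [a| |] //= _; rewrite /dist1 /= !subrr normr0 ?adde0.
Qed.

Lemma dist1_gt0 x y : x != y -> (0 < dist1 x y)%E.
Proof.
case: x => x1 [a| |]; case: y => y1 [b| |] => hne; rewrite /dist1 /= ?ltey //.
- rewrite -EFinD lte_fin.
  have [e1|ne1] := eqVneq x1 y1.
    rewrite e1 subrr normr0 add0r normr_gt0 subr_eq0.
    by apply: contraNneq hne => ->; rewrite e1.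
  by rewrite ltr_pwDl // normr_gt0 subr_eq0.
- rewrite adde0 lte_fin normr_gt0 subr_eq0.
  by apply: contraNneq hne => ->.
Qed.

Lemma delta_gt0 x : x.2 != x.1%:E -> (0 < delta x)%E.
Proof.
case: x => x1 [a| |] //= hne; rewrite /delta /= ?ltey // lte_fin normr_gt0 subr_eq0.
by apply: contraNneq hne => ->.
Qed.

End Metric.

Lemma H1 (R : realType) (a b c : \bar R) : (0 <= c)%E -> (a <= b)%E -> (a <= b + c)%E.
Proof. by move=> c0 ab; apply: le_trans ab _; apply: leeDl. Qed.
Lemma H2 (R : realType) (a b c : \bar R) : (0 <= c)%E -> (a <= b)%E -> (a <= c + b)%E.
Proof. by move=> c0 ab; apply: le_trans ab _; apply: leeDr. Qed.

Section Conc.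
Variables (R : realType) (s : {fset (pt R)}).
Local Notation N := (option s).

Definition cc (u v : N) : \bar R :=
  match u, v with
  | Some x, Some y => dist1 (val x) (val y)
  | Some x, None => delta (val x)
  | None, Some y => delta (val y)
  | None, None => 0%E
  end.

Lemma cc0 u v : (0 <= cc u v)%E.
Proof. by case: u => [x|]; case: v => [y|] //=; rewrite ?dist1_ge0 ?delta_ge0. Qed.

Lemma ccC u v : cc u v = cc v u.
Proof. by case: u => [x|]; case: v => [y|] //=; rewrite dist1C. Qed.

Lemma cctri u v r : r != None -> (cc u v <= cc u r + cc r v)%E.
Proof.
case: r => // r _; case: u => [x|]; case: v => [y|] /=.
- exact: dist1_tri.
- exact: delta_tri2.
- exact: delta_tri1.
- by rewrite adde_ge0 // delta_ge0.
Qed.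

Lemma fsbig_s (V : Type) (idx : V) (op : Monoid.com_law idx) (A : set (pt R))
    (f : pt R -> V) : (forall x, A x -> x \in s) ->
  \big[op/idx]_(x \in A) f x =
  \big[op/idx]_(x : s) (if val x \in A then f (val x) else idx).
Proof.
move=> hA; rewrite fsbig_mkcond (fsbigTE s); last first.
  move=> i his; rewrite /patch; case: ifP => // /set_mem Ai.
  by move: his; rewrite hA.
by rewrite big_seq_fsetE.
Qed.

Lemma insupp (f : pt R -> R) x : (x \in supp f) = (f x != 0).
Proof. by apply/idP/idP => [/set_mem //|h]; apply/mem_set. Qed.

Definition pflow (A B : pt R -> R) (T : pt R -> pt R -> R) (X Y : pt R -> R)
  (u v : N) : R :=
  match u, v with
  | Some x, Some y => if (val x \in supp A) && (val y \in supp B) then T (val x) (val y) else 0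
  | Some x, None => if val x \in supp A then X (val x) else 0
  | None, Some y => if val y \in supp B then Y (val y) else 0
  | None, None => 0
  end.

Lemma fsbig_sE (A : set (pt R)) (f : pt R -> \bar R) : (forall x, A x -> x \in s) ->
  (\sum_(x \in A) f x = \sum_(x : s) (if val x \in A then f (val x) else 0))%E.
Proof. exact: fsbig_s. Qed.

Lemma fsbig_sR (A : set (pt R)) (f : pt R -> R) : (forall x, A x -> x \in s) ->
  (\sum_(x \in A) f x = \sum_(x : s) (if val x \in A then f (val x) else 0)).
Proof. exact: fsbig_s. Qed.

Lemma pflow_ok A B T X Y : (forall x, A x != 0 -> x \in s) ->
  (forall x, B x != 0 -> x \in s) -> feasible A B T X Y ->
  [/\ nneg (pflow A B T X Y),
      forall x : s, out (pflow A B T X Y) (Some x) = A (val x),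
      forall x : s, inn (pflow A B T X Y) (Some x) = B (val x) &
      fcost cc (pflow A B T X Y) = cost A B T X Y].
Proof.
move=> hA hB [T0 [X0 [Y0 [fA fB]]]].
split.
- case=> [x|]; case=> [y|] //=.
  + by case: ifP => // /andP[hx hy]; apply: T0.
  + by case: ifP => // hx; apply: X0.
  + by case: ifP => // hy; apply: Y0.
- move=> x; rewrite /out big_opt /=.
  case: ifP => hx.
    under eq_bigr => y _ do rewrite andTb.
    by rewrite -fsbig_sR // fA.
  rewrite big1 ?addr0; last by move=> y _.
  by apply/esym/eqP; move/negbT: hx; rewrite insupp negbK.
- move=> y; rewrite /inn big_opt /=.
  case: ifP => hy.
    under eq_bigr => x _ do rewrite andbT.
    by rewrite -(fsbig_sR (supp A) (fun z => T z (val y))) // fB.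
  rewrite big1 ?addr0; last by move=> x _; rewrite andbF.
  by apply/esym/eqP; move/negbT: hy; rewrite insupp negbK.
- rewrite /fcost /cost big_opt /= big_opt /= mule0 add0e.
  under [X in (_ + X)%E]eq_bigr => x _ do rewrite big_opt /=.
  rewrite big_split /= [X in (X = _)%E]addeC [X in (X + _ = _)%E]addeC.
  rewrite (fsbig_sE _ _ hA) (fsbig_sE _ _ hA) (fsbig_sE _ _ hB).
  congr (_ + _ + _)%E.
  + apply: eq_bigr => x _; case: ifP => hx.
      rewrite (fsbig_sE _ _ hB); apply: eq_bigr => y _; rewrite ?andTb.
      by case: ifP => // _; rewrite mul0e.
    by rewrite big1 // => y _; rewrite mul0e.
  + by apply: eq_bigr => x _; case: ifP => // _; rewrite mul0e.
  + by apply: eq_bigr => y _; case: ifP => // _; rewrite mul0e.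
Qed.

Definition lft (x : pt R) : N := insub x.
Lemma lftK (x : s) : lft (val x) = Some x.
Proof. exact: valK. Qed.

Lemma le_out (F : N -> N -> R) u v : nneg F -> F u v <= out F u.
Proof.
move=> F0; rewrite /out (bigD1 v) //= lerDl sumr_ge0 // => w _; exact: F0.
Qed.

Lemma le_inn (F : N -> N -> R) u v : nneg F -> F u v <= inn F v.
Proof.
move=> F0; rewrite /inn (bigD1 u) //= lerDl sumr_ge0 // => w _; exact: F0.
Qed.

Lemma flow_plan (A B : pt R -> R) (F : N -> N -> R) :
  (forall x, A x != 0 -> x \in s) -> (forall x, B x != 0 -> x \in s) ->
  (forall x, 0 <= A x) -> (forall x, 0 <= B x) ->
  (forall x, x \in s -> x.2 != -oo%E) ->
  nneg F -> (forall x : s, out F (Some x) - inn F (Some x) = A (val x) - B (val x)) ->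
  (W1 A B <= fcost cc F)%E.
Proof.
move=> hA hB A0 B0 hs F0 hdiv.
have [G [G0 dG cG tG]] := @reduce R N None cc cc0 cctri F F0.
apply: le_trans cG.
pose m x := Num.min (A x) (B x).
have m0 x : 0 <= m x by rewrite /m le_min A0 B0.
have hOI (x : s) : out G (Some x) + m (val x) = A (val x) /\
                   inn G (Some x) + m (val x) = B (val x).
  have o0 : 0 <= out G (Some x) by apply: sumr_ge0 => v _; apply: G0.
  have i0 : 0 <= inn G (Some x) by apply: sumr_ge0 => v _; apply: G0.
  have := hdiv x; rewrite -dG /m.
  have [h|h] := tG (Some x) isT; rewrite h => e.
  - have hle : A (val x) <= B (val x) by lra.
    rewrite (min_idPl hle); lra.
  - have hle : B (val x) <= A (val x) by lra.
    rewrite (min_idPr hle); lra.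
have loop0 (x : s) : G (Some x) (Some x) = 0.
  apply/le_anti; rewrite G0 andbT.
  have [h|h] := tG (Some x) isT; rewrite -h.
    exact: le_out.
  exact: le_inn.
have zB (u : N) (y : s) : val y \notin supp B -> G u (Some y) = 0.
  rewrite insupp negbK => /eqP hy.
  have [_ e] := hOI y; rewrite /m hy (min_idPr (A0 _)) addr0 in e.
  by apply/le_anti; rewrite G0 andbT -e; apply: le_inn.
have zA (x : s) (v : N) : val x \notin supp A -> G (Some x) v = 0.
  rewrite insupp negbK => /eqP hx.
  have [e _] := hOI x; rewrite /m hx (min_idPl (B0 _)) addr0 in e.
  by apply/le_anti; rewrite G0 andbT -e; apply: le_out.
pose T x y := if x == y then m x else G (lft x) (lft y).
pose X x := G (lft x) None.
pose Y y := G None (lft y).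
have hT (x y : s) : T (val x) (val y) = if x == y then m (val x) else G (Some x) (Some y).
  by rewrite /T val_eqE !lftK.
have sumT (x : s) : \sum_(y : s) (if val y \in supp B then T (val x) (val y) else 0) =
    m (val x) + \sum_(y : s) G (Some x) (Some y).
  transitivity (\sum_(y : s) (G (Some x) (Some y) + (if x == y then m (val x) else 0))).
    apply: eq_bigr => y _; rewrite hT.
    case: ifP => hy; case: eqVneq => [exy|hxy].
    - by rewrite -exy loop0 add0r.
    - by rewrite addr0.
    - rewrite -exy loop0 add0r; rewrite -exy in hy.
      by move/negbT: hy; rewrite insupp negbK /m => /eqP ->; rewrite (min_idPr (A0 _)).
    - by rewrite zB ?hy ?addr0.
  rewrite big_split /= addrC; congr (_ + _).
  by rewrite (bigD1 x) //= eqxx big1 ?addr0 // => y /negbTE; rewrite eq_sym => ->.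
have sumT' (y : s) : \sum_(x : s) (if val x \in supp A then T (val x) (val y) else 0) =
    m (val y) + \sum_(x : s) G (Some x) (Some y).
  transitivity (\sum_(x : s) (G (Some x) (Some y) + (if x == y then m (val y) else 0))).
    apply: eq_bigr => x _; rewrite hT.
    case: ifP => hx; case: eqVneq => [exy|hxy].
    - by rewrite exy loop0 add0r.
    - by rewrite addr0.
    - rewrite exy loop0 add0r; rewrite exy in hx.
      by move/negbT: hx; rewrite insupp negbK /m => /eqP ->; rewrite (min_idPl (B0 _)).
    - by rewrite zA ?hx ?addr0.
  rewrite big_split /= addrC; congr (_ + _).
  by rewrite (bigD1 y) //= eqxx big1 ?addr0 // => x /negbTE ->.
have feas : feasible A B T X Y.
  split; [|split; [|split; [|split]]].
  - move=> x y _ _; rewrite /T; case: ifP => _ //; exact: G0.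
  - by move=> x _; apply: G0.
  - by move=> y _; apply: G0.
  - move=> x hx; have xs := hA x (set_mem hx).
    pose x' : s := [` xs]%fset.
    have vx : val x' = x by [].
    rewrite (fsbig_sR _ _ hB) -vx sumT /X lftK.
    have [e _] := hOI x'; rewrite -e /out big_optR; lra.
  - move=> y hy; have ys := hB y (set_mem hy).
    pose y' : s := [` ys]%fset.
    have vy : val y' = y by [].
    rewrite (fsbig_sR _ (fun z => T z y) hA) -vy sumT' /Y lftK.
    have [_ e] := hOI y'; rewrite -e /inn big_optR; lra.
have hW : (W1 A B <= cost A B T X Y)%E.
  by apply: ereal_inf_lbound; exists T, X, Y.
apply: le_trans hW _.
have Gc u v : (0 <= (G u v)%:E * cc u v)%E by rewrite mule_ge0 ?lee_fin ?G0 ?cc0.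
rewrite /fcost big_optE /= big_optE /= mule0 add0e.
under [X in (_ <= _ + X)%E]eq_bigr => x _ do rewrite big_optE /=.
rewrite big_split /= [X in (_ <= X)%E]addeC [X in (_ <= X + _)%E]addeC.
rewrite /cost (fsbig_sE _ _ hA) (fsbig_sE _ _ hA) (fsbig_sE _ _ hB).
apply: leeD; [apply: leeD|].
- apply: lee_sum => x _; case: ifP => hx; last first.
    by apply: sume_ge0 => y _; apply: (Gc (Some x) (Some y)).
  rewrite (fsbig_sE _ _ hB); apply: lee_sum => y _; case: ifP => hy; last first.
    exact: (Gc (Some x) (Some y)).
  rewrite hT; case: eqVneq => [<-|_] //.
  rewrite dist1xx ?mule0; first exact: lexx.
  exact/hs/fsvalP.
- apply: lee_sum => x _; case: ifP => _; last exact: (Gc (Some x) None).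
  by rewrite /X lftK.
- apply: lee_sum => y _; case: ifP => _; last exact: (Gc None (Some y)).
  by rewrite /Y lftK.
Qed.

Definition trF (F : N -> N -> R) u v := F v u.

Lemma fcost_tr F : fcost cc (trF F) = fcost cc F.
Proof.
rewrite /fcost /trF exchange_big; apply: eq_bigr => u _; apply: eq_bigr => v _.
by rewrite ccC.
Qed.

Lemma fcost_ge0 F : nneg F -> (0 <= fcost cc F)%E.
Proof.
move=> F0; apply: sume_ge0 => u _; apply: sume_ge0 => v _.
by rewrite mule_ge0 ?lee_fin ?F0 ?cc0.
Qed.

Lemma fcostD F1 F2 : nneg F1 -> nneg F2 ->
  fcost cc (fun u v => F1 u v + F2 u v) = (fcost cc F1 + fcost cc F2)%E.
Proof.
move=> F10 F20; rewrite /fcost -big_split; apply: eq_bigr => u _.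
rewrite -big_split; apply: eq_bigr => v _.
by rewrite EFinD ge0_muleDl ?lee_fin ?F10 ?F20.
Qed.

Definition mm (x : s) : \bar R := \big[Order.min/+oo%E]_(v | v != Some x) cc (Some x) v.

Lemma mm_gt0 (x : s) : (val x).2 != (val x).1%:E -> (0 < mm x)%E.
Proof.
move=> hx; apply/bigmin_gtP; split => // -[y|] hy /=.
  apply: dist1_gt0; apply: contraNneq hy => e.
  by apply/eqP; congr Some; apply: val_inj.
exact: delta_gt0.
Qed.

Lemma flow_lb (F : N -> N -> R) (x : s) : nneg F ->
  ((out F (Some x) - inn F (Some x))%:E * mm x <= fcost cc F)%E.
Proof.
move=> F0.
have m0 : (0 <= mm x)%E.
  by apply/bigmin_geP; split => // v _; apply: cc0.
have [hg|hg] := leP (out F (Some x) - inn F (Some x)) 0.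
  apply: (@le_trans _ _ 0%E); last exact: fcost_ge0.
  by apply: mule_le0_ge0 => //; rewrite lee_fin.
rewrite /fcost (bigD1 (Some x)) //.
apply: H1; first by apply: sume_ge0 => u _; apply: sume_ge0 => v _;
  rewrite mule_ge0 ?lee_fin ?F0 ?cc0.
rewrite (bigD1 (Some x)) //.
apply: H2; first by rewrite mule_ge0 ?lee_fin ?F0 ?cc0.
apply: (@le_trans _ _ (\sum_(v | v != Some x) ((F (Some x) v)%:E * mm x))%E); last first.
  apply: lee_sum => v hv; apply: lee_wpmul2l; first by rewrite lee_fin F0.
  exact: bigmin_le_cond.
rewrite -ge0_sume_distrl; last by move=> v _; rewrite lee_fin F0.
rewrite sumEFin; apply: lee_wpmul2r => //; rewrite lee_fin.
have e : out F (Some x) = F (Some x) (Some x) + \sum_(v | v != Some x) F (Some x) v.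
  by rewrite /out (bigD1 (Some x)).
have := @le_inn F (Some x) (Some x) F0; lra.
Qed.

End Conc.

Lemma cost_ge0 (R : realType) (A B : pt R -> R) T X Y :
  feasible A B T X Y -> (0 <= cost A B T X Y)%E.
Proof.
move=> [T0 [X0 [Y0 _]]]; rewrite /cost; apply: adde_ge0; [apply: adde_ge0|].
- apply: fsume_ge0 => x hx; apply: fsume_ge0 => y hy.
  by rewrite mule_ge0 ?dist1_ge0 // lee_fin T0 //; apply: mem_set.
- apply: fsume_ge0 => x hx.
  by rewrite mule_ge0 ?delta_ge0 // lee_fin X0 //; apply: mem_set.
- apply: fsume_ge0 => x hx.
  by rewrite mule_ge0 ?delta_ge0 // lee_fin Y0 //; apply: mem_set.
Qed.

Lemma W1_ge0 (R : realType) (A B : pt R -> R) : (0 <= W1 A B)%E.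
Proof.
apply: le_ereal_inf_tmp => c [T [X [Y [f ->]]]]; exact: cost_ge0.
Qed.

Lemma inf_add (R : realType) (S1 S2 : set (\bar R)) (w : \bar R) :
  (forall c, S1 c -> (0 <= c)%E) -> (forall c, S2 c -> (0 <= c)%E) ->
  (forall c1 c2, S1 c1 -> S2 c2 -> (w <= c1 + c2)%E) ->
  (w <= ereal_inf S1 + ereal_inf S2)%E.
Proof.
move=> h1 h2 h.
have i1 : (0 <= ereal_inf S1)%E by apply: le_ereal_inf_tmp.
have i2 : (0 <= ereal_inf S2)%E by apply: le_ereal_inf_tmp.
have st1 c1 : S1 c1 -> (w <= c1 + ereal_inf S2)%E.
  move=> hc1; have := h1 _ hc1; case: c1 hc1 => [r| |] hc1 // r0.
    rewrite -leeBlDl //; apply: le_ereal_inf_tmp => c2 hc2.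
    by rewrite leeBlDl //; apply: h.
  by rewrite addye ?leey // gt_eqF // (lt_le_trans _ i2) // ltNye.
case E2 : (ereal_inf S2) => [r| |].
- rewrite -leeBlDr //; apply: le_ereal_inf_tmp => c1 hc1.
  by rewrite leeBlDr // -E2; apply: st1.
- by rewrite addey ?leey // gt_eqF // (lt_le_trans _ i1) // ltNye.
- by rewrite E2 in i2.
Qed.

Lemma posp_negp (R : realType) (f : pt R -> R) x : posp f x - negp f x = f x.
Proof.
rewrite /posp /negp !maxEle oppr_le0; have [h|h] := leP (f x) 0.
  by rewrite sub0r; case: leP => h2; lra.
by rewrite (ltW h) subr0.
Qed.

Arguments posp_negp {R}.

Lemma posp_ge0 (R : realType) (f : pt R -> R) x : 0 <= posp f x.
Proof. by rewrite /posp le_max lexx orbT. Qed.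
Lemma negp_ge0 (R : realType) (f : pt R -> R) x : 0 <= negp f x.
Proof. by rewrite /negp le_max lexx orbT. Qed.

Section Pm.
Variables (R : realType) (s : {fset (pt R)}).
Hypothesis hs : forall x, x \in s -> x.2 != -oo%E.
Local Notation N := (option s).

Definition Apm (f g : pt R -> R) x := posp f x + negp g x.
Definition Bpm (f g : pt R -> R) x := negp f x + posp g x.

Lemma supp_pm (f g : pt R -> R) (h : pt R -> R) :
  (forall x, f x != 0 -> x \in s) -> (forall x, g x != 0 -> x \in s) ->
  (h = Apm f g \/ h = Bpm f g) -> forall x, h x != 0 -> x \in s.
Proof.
move=> hf hg hh x; apply: contraNT => xs.
have f0 : f x = 0 by apply/eqP; apply: contraNT xs => /hf ->.
have g0 : g x = 0 by apply/eqP; apply: contraNT xs => /hg ->.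
by case: hh => ->; rewrite /Apm /Bpm /posp /negp f0 g0 oppr0 maxxx addr0.
Qed.

Lemma P1 (f g : pt R -> R) T X Y :
  (forall x, f x != 0 -> x \in s) -> (forall x, g x != 0 -> x \in s) ->
  feasible (Apm f g) (Bpm f g) T X Y ->
  exists F : N -> N -> R, [/\ nneg F,
    forall x : s, out F (Some x) - inn F (Some x) = f (val x) - g (val x) &
    fcost (@cc R s) F = cost (Apm f g) (Bpm f g) T X Y].
Proof.
move=> hf hg hfeas.
have [F0 ho hi hc] := @pflow_ok R s _ _ _ _ _ (@supp_pm f g _ hf hg (or_introl erefl))
  (@supp_pm f g _ hf hg (or_intror erefl)) hfeas.
exists (pflow R s (Apm f g) (Bpm f g) T X Y); split => // x.
rewrite ho hi /Apm /Bpm.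
have := posp_negp f (val x); have := posp_negp g (val x); lra.
Qed.

Lemma P2 (f g : pt R -> R) (F : N -> N -> R) :
  (forall x, f x != 0 -> x \in s) -> (forall x, g x != 0 -> x \in s) ->
  nneg F ->
  (forall x : s, out F (Some x) - inn F (Some x) = f (val x) - g (val x)) ->
  (W1pm f g <= fcost (@cc R s) F)%E.
Proof.
move=> hf hg F0 hd.
apply: (@flow_plan R s (Apm f g) (Bpm f g)) => //.
- exact: (@supp_pm f g _ hf hg (or_introl erefl)).
- exact: (@supp_pm f g _ hf hg (or_intror erefl)).
- by move=> x; rewrite /Apm addr_ge0 ?posp_ge0 ?negp_ge0.
- by move=> x; rewrite /Bpm addr_ge0 ?posp_ge0 ?negp_ge0.
- move=> x; rewrite hd /Apm /Bpm.
  have := posp_negp f (val x); have := posp_negp g (val x); lra.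
Qed.

End Pm.
Arguments P1 {R s f g T X Y}.
Arguments P2 {R s} hs {f g F}.
Arguments flow_lb {R s F} x.
Arguments mm_gt0 {R s} x.
Arguments fcost_tr {R s} F.
Arguments trF {R s} F u v.
Arguments mm {R s} x.
Arguments cc {R s} u v.
Arguments fcostD {R s} F1 F2.
Arguments Apm {R}.
Arguments Bpm {R}.

Local Open Scope ereal_scope.

Theorem mainTheorem12 (R : realType) (xi eta zeta : pt R -> R) :
  admissible xi -> admissible eta -> admissible zeta ->
  [/\ 0 <= W1pm xi eta,
      (0 < W1pm xi eta <-> xi <> eta),
      W1pm xi eta = W1pm eta xi &
      W1pm xi zeta <= W1pm xi eta + W1pm eta zeta].
Proof.
move=> [finx adx] [fine ade] [finz adz].
pose U := (supp xi `|` supp eta `|` supp zeta)%classic.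
have finU : finite_set U by rewrite !finite_setU.
pose s := fset_set U.
have inS x : (x \in s) = (x \in U) by rewrite in_fset_set.
have hxi x : (xi x != 0)%R -> x \in s by move=> h; rewrite inS; apply/mem_set; left; left.
have het x : (eta x != 0)%R -> x \in s by move=> h; rewrite inS; apply/mem_set; left; right.
have hze x : (zeta x != 0)%R -> x \in s by move=> h; rewrite inS; apply/mem_set; right.
have hs x : x \in s -> x.2 != -oo.
  rewrite inS => /set_mem [[h|h]|h]; [exact: (adx x h).1|exact: (ade x h).1|exact: (adz x h).1].
have zero0 : fcost (@cc R s) (fun _ _ => 0%R) = 0.
  by rewrite /fcost big1 // => u _; rewrite big1 // => v _; rewrite mul0e.
have eq0 f : (forall x, f x != 0%R -> x \in s) -> W1pm f f = 0.
  move=> hf; apply/le_anti; rewrite W1_ge0 andbT -zero0.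
  apply: (P2 hs hf hf) => //.
  by move=> x; rewrite /out /inn big1_eq !subrr.
have sym f g : (forall x, f x != 0%R -> x \in s) -> (forall x, g x != 0%R -> x \in s) ->
    W1pm g f <= W1pm f g.
  move=> hf hg; apply: le_ereal_inf_tmp => c [T [X [Y [hfe ->]]]].
  have [F [F0 hd hc]] := P1 hf hg hfe.
  rewrite -hc -fcost_tr; apply: (P2 hs hg hf) => [u v|x]; first exact: F0.
  have -> : out (trF F) (Some x) = inn F (Some x) by [].
  have -> : inn (trF F) (Some x) = out F (Some x) by [].
  have := hd x; lra.
split.
- exact: W1_ge0.
- split.
    by move=> hpos heq; move: hpos; rewrite -heq eq0 // ltxx.
  move=> hne.
  have : ~ (forall p, xi p = eta p) by move=> hall; apply: hne; apply: funext.
  move/existsNP => [p /eqP hp].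
  have hps : p \in s.
    have [h|h] := eqVneq (xi p) 0%R; last exact: hxi.
    by apply: het; rewrite -h eq_sym.
  have hdg : p.2 != p.1%:E.
    have [h|h] := eqVneq (xi p) 0%R; last exact: (adx p h).2.
    by apply: (ade p _).2; rewrite -h eq_sym.
  pose p' : s := [` hps]%fset.
  pose g := (xi p - eta p)%R.
  have g0 : (0 < `|g|)%R by rewrite normr_gt0 subr_eq0.
  have key : `|g|%:E * mm p' <= W1pm xi eta.
    apply: le_ereal_inf_tmp => c [T [X [Y [hfe ->]]]].
    have [F [F0 hd hc]] := P1 hxi het hfe.
    rewrite -hc.
    have [hg|hg] := leP 0%R g.
      by rewrite ger0_norm //; have := flow_lb p' F0; rewrite hd.
    rewrite ltr0_norm // -fcost_tr.
    have F0' : nneg (trF F) by move=> u v; apply: F0.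
    have := flow_lb p' F0'.
    have -> : out (trF F) (Some p') = inn F (Some p') by [].
    have -> : inn (trF F) (Some p') = out F (Some p') by [].
    have -> : (inn F (Some p') - out F (Some p') = - g)%R by have := hd p'; rewrite /g /=; lra.
    done.
  apply: lt_le_trans key; apply: mule_gt0; first by rewrite lte_fin.
  exact: mm_gt0.
- by apply/le_anti; rewrite !sym.
- pose S1 := [set c | exists T X Y, feasible (Apm xi eta) (Bpm xi eta) T X Y /\
       c = cost (Apm xi eta) (Bpm xi eta) T X Y]%classic.
  pose S2 := [set c | exists T X Y, feasible (Apm eta zeta) (Bpm eta zeta) T X Y /\
       c = cost (Apm eta zeta) (Bpm eta zeta) T X Y]%classic.
  have -> : W1pm xi eta = ereal_inf S1 by [].
  have -> : W1pm eta zeta = ereal_inf S2 by [].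
  apply: (@inf_add R
    [set c | exists T X Y, feasible (Apm xi eta) (Bpm xi eta) T X Y /\
       c = cost (Apm xi eta) (Bpm xi eta) T X Y]%classic
    [set c | exists T X Y, feasible (Apm eta zeta) (Bpm eta zeta) T X Y /\
       c = cost (Apm eta zeta) (Bpm eta zeta) T X Y]%classic).
  + by move=> c [T [X [Y [hf ->]]]]; apply: cost_ge0.
  + by move=> c [T [X [Y [hf ->]]]]; apply: cost_ge0.
  + move=> c1 c2 [T1 [X1 [Y1 [hf1 ->]]]] [T2 [X2 [Y2 [hf2 ->]]]].
    have [F1 [F10 hd1 hc1]] := P1 hxi het hf1.
    have [F2 [F20 hd2 hc2]] := P1 het hze hf2.
    rewrite -hc1 -hc2 -fcostD //.
    apply: (P2 hs hxi hze) => [u v|x]; first by rewrite addr_ge0 ?F10 ?F20.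
    rewrite /out /inn !big_split /=.
    have := hd1 x; have := hd2 x; rewrite /out /inn; lra.
Qed.
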